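(* For every $\mu\in\Delta(\Omega)$ and $c\ge0$, in the optimization problem $$V(\mu,c)=\sup\Big\{\sum_m\lambda_mu^*_S(\nu_m):\sum_m\lambda_m\nu_m=\mu,\ \sum_m\lambda_mH(\nu_m)\ge H(\mu)-c\Big\}$$ the number of posteriors can be chosen to be at most $\min\{|A|,|\Omega|+1\}$; that is, the supremum is unchanged when restricted to splittings $(\lambda_m,\nu_m)_m$ with at most $\min\{|A|,|\Omega|+1\}$ elements.
   Context: For a finite set $S$, $\Delta(S)$ is the set of probability distributions on $S$. $\Omega$ is a finite set of states, $A$ a finite set of actions, $u_S,u_R:\Omega\times A\to\mathbb{R}$ payoff functions of sender and receiver. For $\nu\in\Delta(\Omega)$, $A^*(\nu)=\arg\max_{a\in A}\sum_\omega\nu(\omega)u_R(\omega,a)$ and $u^*_S(\nu)=\min_{a\in A^*(\nu)}\sum_\omega\nu(\omega)u_S(\omega,a)$. $H(q)=-\sum_sq(s)\log_2q(s)$ ($0\log0=0$). The supremum is over finite families $(\lambda_m,\nu_m)_m$ with $\nu_m\in\Delta(\Omega)$, $\lambda_m\ge0$, $\sum_m\lambda_m=1$. *)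

(* Defs.v *)
From HB Require Import structures.
From mathcomp Require Import all_boot all_order all_algebra.
From mathcomp Require Import all_classical all_reals.
From mathcomp Require Import exp.
Set Implicit Arguments. Unset Strict Implicit. Unset Printing Implicit Defensive.
Import Order.TTheory GRing.Theory Num.Theory.
Local Open Scope ring_scope.
Local Open Scope classical_set_scope.

Section Defs.
Variables (R : realType) (Omega A : finType).

Definition is_dist (nu : {ffun Omega -> R}) : Prop :=
  (forall w, 0 <= nu w) /\ \sum_(w : Omega) nu w = 1.

Definition expected (u : Omega -> A -> R) (nu : {ffun Omega -> R}) (a : A) : R :=
  \sum_(w : Omega) nu w * u w a.

Definition Astar (uR : Omega -> A -> R) (nu : {ffun Omega -> R}) : set A :=
  [set a | forall b : A, expected uR nu b <= expected uR nu a].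

Definition uS_star (uS uR : Omega -> A -> R) (nu : {ffun Omega -> R}) : R :=
  inf [set expected uS nu a | a in Astar uR nu].

Definition entropy (q : {ffun Omega -> R}) : R :=
  - \sum_(s : Omega) (if q s == 0 then 0 else q s * (ln (q s) / ln 2)).

Definition feasible (mu : {ffun Omega -> R}) (c : R) (n : nat)
  (lam : 'I_n -> R) (nu : 'I_n -> {ffun Omega -> R}) : Prop :=
  [/\ forall i, 0 <= lam i,
      \sum_(i < n) lam i = 1,
      forall i, is_dist (nu i),
      forall w, \sum_(i < n) lam i * nu i w = mu w
    & entropy mu - c <= \sum_(i < n) lam i * entropy (nu i)].

Definition values (uS uR : Omega -> A -> R) (mu : {ffun Omega -> R}) (c : R)
  (P : nat -> Prop) : set R :=
  [set v | exists n (lam : 'I_n -> R) (nu : 'I_n -> {ffun Omega -> R}),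
     [/\ P n, feasible mu c lam nu &
         v = \sum_(i < n) lam i * uS_star uS uR (nu i)]].

Definition V (uS uR : Omega -> A -> R) (mu : {ffun Omega -> R}) (c : R) : R :=
  sup (values uS uR mu c (fun _ => True)).

End Defs.

(* Main.v *)
Require Import Defs.
From HB Require Import structures.
From mathcomp Require Import all_boot all_order all_algebra.
From mathcomp Require Import all_classical all_reals.
From mathcomp Require Import exp zify ring lra.
Set Implicit Arguments. Unset Strict Implicit. Unset Printing Implicit Defensive.
Import Order.TTheory GRing.Theory Num.Theory.
Local Open Scope ring_scope.
Local Open Scope classical_set_scope.

Lemma lin_dep (R : realType) n (J : finType) (x : 'I_n -> J -> R) :
  (#|J| < n)%N -> exists d : 'I_n -> R,
    (exists i, d i != 0) /\ forall j, \sum_i d i * x i j = 0.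
Proof.
move=> hn.
pose M : 'M[R]_(n, #|J|) := \matrix_(i, k) x i (enum_val k).
pose K := kermx M.
have hK : K != 0.
  rewrite -mxrank_eq0 /K mxrank_ker.
  have := rank_leq_col M. lia.
have [r hr] : exists r, row r K != 0.
  apply/existsP; apply: contraT; rewrite negb_exists => /forallP H.
  suff hK0 : K = 0 by rewrite hK0 eqxx in hK.
  apply/row_matrixP => r.
  by rewrite row0; apply/eqP; move: (H r); rewrite negbK.
have hv : row r K *m M = 0 by rewrite -row_mul mulmx_ker row0.
exists (fun i => row r K 0 i); split.
  apply/existsP; apply: contraT; rewrite negb_exists => /forallP H.
  suff h0 : row r K = 0 by rewrite h0 eqxx in hr.
  apply/matrixP => a b.
  move: (H b); rewrite negbK ord1 !mxE; by move/eqP.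
move=> j.
have := congr1 (fun A : 'M_(1, #|J|) => A 0 (enum_rank j)) hv.
rewrite /= !mxE => h; rewrite -[RHS]h.
by apply: eq_bigr => i _; rewrite !mxE enum_rankK.
Qed.

Lemma lp_reduce (R : realType) (J : finType) (cw : J -> R) n :
  forall (x : 'I_n -> J -> R) (u : 'I_n -> R) (lam : 'I_n -> R),
  (forall i, \sum_j cw j * x i j = 1) -> (forall i, 0 <= lam i) ->
  exists m (g : 'I_m -> 'I_n) (lam' : 'I_m -> R),
   [/\ (m <= minn n #|J|)%N, forall k, 0 <= lam' k,
       forall j, \sum_k lam' k * x (g k) j = \sum_i lam i * x i j &
       \sum_i lam i * u i <= \sum_k lam' k * u (g k)].
Proof.
elim: n => [|n IH] x u lam hc hl.
  exists 0%N, id, lam; split => //; lia.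
case: (leqP n.+1 #|J|) => hn.
  exists n.+1, id, lam; split => //; lia.
have [d0 [[i1 hi1] hd0]] := @lin_dep R _ _ x hn.
have hsum0 : forall d : 'I_n.+1 -> R, (forall j, \sum_i d i * x i j = 0) ->
    \sum_i d i = 0.
  move=> d hd.
  transitivity (\sum_i d i * \sum_j cw j * x i j).
    by apply: eq_bigr => i _; rewrite hc mulr1.
  under eq_bigr do rewrite big_distrr /=.
  rewrite exchange_big /= big1 // => j _.
  under eq_bigr do rewrite mulrCA.
  by rewrite -big_distrr /= hd mulr0.
pose d := if 0 <= \sum_i d0 i * u i then d0 else (fun i => - d0 i).
have hdx : forall j, \sum_i d i * x i j = 0.
  move=> j; rewrite /d; case: ifP => _; first exact: hd0.
  under eq_bigr do rewrite mulNr.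
  by rewrite sumrN hd0 oppr0.
have hdu : 0 <= \sum_i d i * u i.
  rewrite /d; case: ifP => // /negbT; rewrite -ltNge => h.
  under eq_bigr do rewrite mulNr.
  by rewrite sumrN oppr_ge0 ltW.
have hdi1 : d i1 != 0 by rewrite /d; case: ifP => _ //; rewrite oppr_eq0.
have hd := hsum0 _ hdx.
have [i0 hi0] : exists i0, d i0 < 0.
  apply/existsP; apply: contraT; rewrite negb_exists => /forallP H.
  have hge : forall i, 0 <= d i by move=> i; move: (H i); rewrite -leNgt.
  have := psumr_eq0P (fun i _ => hge i) hd (i:=i1) isT.
  by move/eqP; rewrite (negbTE hdi1).
pose j := [arg min_(i < i0 | d i < 0) (lam i / - d i)]%O.
have [hj hmin] : d j < 0 /\ forall i, d i < 0 -> lam j / - d j <= lam i / - d i.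
  rewrite /j; case: arg_minP => //= k hk hm; split => // i hi; exact: hm.
pose t := lam j / - d j.
have ht : 0 <= t by rewrite /t divr_ge0 // oppr_ge0 ltW.
pose lam1 := fun i => lam i + t * d i.
have hl1 : forall i, 0 <= lam1 i.
  move=> i; rewrite /lam1; case: (ltP (d i) 0) => hdi.
    have := hmin i hdi; rewrite -/t ler_pdivlMr ?oppr_gt0 //.
    nra.
  by rewrite addr_ge0 // mulr_ge0.
have hl1j : lam1 j = 0.
  have hne : - d j != 0 by rewrite oppr_eq0 lt_eqF.
  rewrite /lam1 /t -mulrA -{2}(opprK (d j)) mulrN mulVf // mulrN1 subrr //.
have hlx : forall (y : 'I_n.+1 -> R), \sum_i lam1 i * y i =
    \sum_i lam i * y i + t * \sum_i d i * y i.
  move=> y; rewrite big_distrr -big_split /=.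
  by apply: eq_bigr => i _; rewrite /lam1; ring.
have [m [g [lam' [hm hl' hx hu]]]] :=
  IH (fun i => x (lift j i)) (fun i => u (lift j i)) (fun i => lam1 (lift j i))
     (fun i => hc (lift j i)) (fun i => hl1 (lift j i)).
exists m, (fun k => lift j (g k)), lam'; split => //.
- move: hm hn; lia.
- move=> j'; rewrite hx.
  have := hlx (fun i => x i j'); rewrite hdx mulr0 addr0 => <-.
  by rewrite (bigD1_ord j) //= hl1j mul0r add0r.
- apply: (le_trans _ hu).
  rewrite (_ : \sum_(i < n) _ = \sum_i lam1 i * u i).
    by rewrite hlx lerDl mulr_ge0.
  by rewrite (bigD1_ord j) //= hl1j mul0r add0r.
Qed.

Lemma sum_option (R : realType) (T : finType) (F : option T -> R) :
  \sum_o F o = F None + \sum_t F (Some t).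
Proof.
rewrite (bigD1 None) //=; congr (_ + _).
rewrite (reindex_omap Some id) //=; last by case.
by apply: eq_bigl => t; rewrite eqxx.
Qed.

Lemma ln_le_sub1 (R : realType) (z : R) : 0 < z -> ln z <= z - 1.
Proof.
move=> hz; have := expR_ge1Dx (ln z); rewrite lnK ?posrE //; lra.
Qed.

Lemma tangent_xlnx (R : realType) (y m : R) : 0 <= y -> 0 < m ->
  y * ln m + y - m <= y * ln y.
Proof.
move=> hy hm; case: (ltP 0 y) => hy0; last first.
  have -> : y = 0 by apply/eqP; rewrite eq_le hy0 hy.
  by rewrite !mul0r !add0r oppr_le0 ltW.
have := @ln_le_sub1 R _ (divr_gt0 hm hy0).
rewrite ln_div ?posrE // => h.
have : y * (ln m - ln y) <= y * (m / y - 1) by rewrite ler_pM2l.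
have e : y * (m / y - 1) = m - y by rewrite mulrBr mulr1 mulrCA mulfV ?gt_eqF // mulr1.
rewrite e; lra.
Qed.

Lemma jensen_xlnx (R : realType) (I : finType) (P : pred I) (l y : I -> R) :
  (forall i, 0 <= l i) -> (forall i, 0 <= y i) ->
  0 < \sum_(i | P i) l i ->
  (\sum_(i | P i) l i) * (((\sum_(i | P i) l i * y i) / (\sum_(i | P i) l i)) *
    ln ((\sum_(i | P i) l i * y i) / (\sum_(i | P i) l i)))
   <= \sum_(i | P i) l i * (y i * ln (y i)).
Proof.
move=> hl hy hL.
set L := \sum_(i | P i) l i. set q := \sum_(i | P i) l i * y i.
have hq0 : 0 <= q by rewrite /q sumr_ge0 // => i _; rewrite mulr_ge0.
case: (ltP 0 q) => hq; last first.
  have q0 : q = 0 by apply/eqP; rewrite eq_le hq hq0.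
  rewrite q0 mul0r mul0r mulr0 big1 // => i Pi.
  have := psumr_eq0P (fun i _ => mulr_ge0 (hl i) (hy i)) q0 Pi.
  by rewrite mulrA => ->; rewrite mul0r.
have hm : 0 < q / L by rewrite divr_gt0.
apply: le_trans (_ : \sum_(i | P i) l i * (y i * ln (q / L) + y i - q / L) <= _).
  rewrite (_ : \sum_(i | P i) _ = q * ln (q / L) + q - L * (q / L)).
    have e : L * (q / L) = q by rewrite mulrCA mulfV ?gt_eqF // mulr1.
    rewrite mulrA e; lra.
  transitivity (\sum_(i | P i) (l i * y i * ln (q / L) + l i * y i - l i * (q / L))).
    by apply: eq_bigr => i _; ring.
  by rewrite big_split big_split /= sumrN -!big_distrl.
apply: ler_sum => i _; apply: ler_wpM2l => //; exact: tangent_xlnx.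
Qed.

Lemma entropyE (R : realType) (Omega : finType) (q : {ffun Omega -> R}) :
  entropy q = - ((\sum_s q s * ln (q s)) / ln 2).
Proof.
rewrite /entropy big_distrl /=; congr (- _); apply: eq_bigr => s _.
by case: eqP => [->|_]; rewrite ?mul0r ?mulrA.
Qed.

Lemma uS_le (R : realType) (Omega A : finType) (uS uR : Omega -> A -> R) nu a :
  Astar uR nu a -> uS_star uS uR nu <= expected uS nu a.
Proof.
move=> ha; apply: ge_inf; last by exists a.
exists (- \sum_b `|expected uS nu b|) => y [b _ <-].
have h : `|expected uS nu b| <= \sum_b `|expected uS nu b|.
  by rewrite (bigD1 b) //= lerDl sumr_ge0.
rewrite lerNl; apply: le_trans h; rewrite -normrN; exact: ler_norm.
Qed.

Lemma uS_ge (R : realType) (Omega A : finType) (uS uR : Omega -> A -> R) nu y :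
  (exists a, Astar uR nu a) ->
  (forall a, Astar uR nu a -> y <= expected uS nu a) -> y <= uS_star uS uR nu.
Proof.
move=> [a ha] h; apply: lb_le_inf; first by exists (expected uS nu a), a.
by move=> z [b hb <-]; apply: h.
Qed.

Definition mnu (R : realType) (Omega : finType) n (lam : 'I_n -> R)
  (nu : 'I_n -> {ffun Omega -> R}) (mu : {ffun Omega -> R}) (P : pred 'I_n) :
  {ffun Omega -> R} :=
  if 0 < \sum_(i | P i) lam i then
    [ffun w => (\sum_(i | P i) lam i * nu i w) / \sum_(i | P i) lam i]
  else mu.

Lemma expected_mnu (R : realType) (Omega A : finType) (u : Omega -> A -> R) n
  (lam : 'I_n -> R) nu mu (P : pred 'I_n) b :
  0 < \sum_(i | P i) lam i ->
  expected u (mnu lam nu mu P) b =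
  (\sum_(i | P i) lam i * expected u (nu i) b) / \sum_(i | P i) lam i.
Proof.
move=> hL; rewrite /mnu hL /expected.
set L := \sum_(i | P i) lam i.
transitivity (\sum_w \sum_(i | P i) lam i * nu i w * u w b / L).
  by apply: eq_bigr => w _; rewrite ffunE mulrAC !big_distrl.
rewrite exchange_big /= big_distrl /=; apply: eq_bigr => i _.
rewrite big_distrr /= big_distrl /=; apply: eq_bigr => w _; by rewrite !mulrA.
Qed.

Lemma merge (R : realType) (Omega A : finType) (uS uR : Omega -> A -> R) n
  (lam : 'I_n -> R) (nu : 'I_n -> {ffun Omega -> R}) (mu : {ffun Omega -> R})
  (P : pred 'I_n) (a : A) :
  is_dist mu -> (forall i, 0 <= lam i) -> (forall i, is_dist (nu i)) ->
  (forall i, P i -> Astar uR (nu i) a) ->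
  [/\ is_dist (mnu lam nu mu P),
      forall w, (\sum_(i | P i) lam i) * mnu lam nu mu P w = \sum_(i | P i) lam i * nu i w,
      \sum_(i | P i) lam i * uS_star uS uR (nu i) <=
        (\sum_(i | P i) lam i) * uS_star uS uR (mnu lam nu mu P) &
      \sum_(i | P i) lam i * entropy (nu i) <=
        (\sum_(i | P i) lam i) * entropy (mnu lam nu mu P)].
Proof.
move=> hmu hl hnu hPa.
set L := \sum_(i | P i) lam i.
have hL0 : 0 <= L by rewrite sumr_ge0.
case: (ltP 0 L) => hL; last first.
  have L0 : L = 0 by apply/eqP; rewrite eq_le hL hL0.
  have l0 : forall i, P i -> lam i = 0 := psumr_eq0P (fun i _ => hl i) L0.
  have hmnu : mnu lam nu mu P = mu by rewrite /mnu -/L L0 ltxx.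
  rewrite hmnu L0 !mul0r; split => //.
  - by move=> w; rewrite mul0r big1 // => i Pi; rewrite l0 // mul0r.
  - by rewrite big1 // => i Pi; rewrite l0 // mul0r.
  - by rewrite big1 // => i Pi; rewrite l0 // mul0r.
have hmnu : forall w, mnu lam nu mu P w = (\sum_(i | P i) lam i * nu i w) / L.
  by move=> w; rewrite /mnu -/L hL ffunE.
have hLn : L != 0 by rewrite gt_eqF.
split.
- split.
    move=> w; rewrite hmnu divr_ge0 // sumr_ge0 // => i _.
    by rewrite mulr_ge0 //; case: (hnu i).
  under eq_bigr do rewrite hmnu.
  rewrite -big_distrl /= exchange_big /=.
  rewrite (eq_bigr (fun i => lam i)) ?mulfV // => i _.
  by rewrite -big_distrr /=; case: (hnu i) => _ ->; rewrite mulr1.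
- by move=> w; rewrite hmnu mulrCA mulfV // mulr1.
- suff h : (\sum_(i | P i) lam i * uS_star uS uR (nu i)) / L <=
      uS_star uS uR (mnu lam nu mu P).
    by have := ler_wpM2l hL0 h; rewrite mulrCA mulfV // mulr1.
  apply: uS_ge.
    exists a => c; rewrite !expected_mnu // ler_pM2r ?invr_gt0 //.
    by apply: ler_sum => i Pi; apply: ler_wpM2l => //; apply: hPa.
  move=> b hb; rewrite expected_mnu // ler_pM2r ?invr_gt0 //.
  apply: ler_sum => i Pi.
  case: (ltP 0 (lam i)) => hli; last first.
    have -> : lam i = 0 by apply/eqP; rewrite eq_le hli hl.
    by rewrite !mul0r.
  apply: ler_wpM2l => //; apply: uS_le => c.
  have hai := hPa i Pi.
  have hba : expected uR (mnu lam nu mu P) a <= expected uR (mnu lam nu mu P) b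
    by apply: hb.
  rewrite !expected_mnu // ler_pM2r ?invr_gt0 // in hba.
  have hd : \sum_(k | P k) lam k * (expected uR (nu k) a - expected uR (nu k) b) = 0.
    apply/eqP; rewrite eq_le; apply/andP; split.
      rewrite (eq_bigr (fun k => lam k * expected uR (nu k) a - lam k * expected uR (nu k) b)); last by move=> k _; rewrite mulrBr.
      by rewrite big_split /= sumrN subr_le0.
    by rewrite sumr_ge0 // => k Pk; rewrite mulr_ge0 // subr_ge0; apply: hPa.
  have hnn : forall k, P k -> 0 <= lam k * (expected uR (nu k) a - expected uR (nu k) b).
    by move=> k Pk; rewrite mulr_ge0 // subr_ge0; apply: hPa.
  have := psumr_eq0P hnn hd Pi.
  move/eqP; rewrite mulf_eq0 gt_eqF //= subr_eq0 => /eqP <-.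
  by apply: hai.
have ln2 : 0 < ln (2 : R) by apply: ln_gt0; rewrite ltr1n.
have e1 : \sum_(i | P i) lam i * entropy (nu i) =
   - ((\sum_s \sum_(i | P i) lam i * (nu i s * ln (nu i s))) / ln 2).
  rewrite exchange_big /= big_distrl /= -sumrN; apply: eq_bigr => i _.
  by rewrite entropyE mulrN mulrA big_distrr.
rewrite e1 entropyE mulrN mulrA big_distrr /= lerN2 ler_pM2r ?invr_gt0 //.
apply: ler_sum => s _; rewrite hmnu.
apply: jensen_xlnx => //; first by move=> i; case: (hnu i).
Qed.

Lemma best_exists (R : realType) (Omega A : finType) (uR : Omega -> A -> R) (a0 : A) nu :
  Astar uR nu [arg max_(a > a0) expected uR nu a]%O.
Proof.
by case: arg_maxP => //= a _ h b; apply: h.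
Qed.


Lemma uS_bound (R : realType) (Omega A : finType) (uS uR : Omega -> A -> R) (a0 : A) nu :
  is_dist nu -> uS_star uS uR nu <= \sum_w \sum_a `|uS w a|.
Proof.
case=> h0 h1.
set a := [arg max_(a > a0) expected uR nu a]%O.
apply: le_trans (uS_le uS (best_exists uR a0 nu)) _.
rewrite /expected; apply: ler_sum => w _.
apply: le_trans (_ : `|uS w a| <= _); last first.
  by rewrite (bigD1 a) //= lerDl sumr_ge0.
have hw : nu w <= 1 by rewrite -h1 (bigD1 w) //= lerDl sumr_ge0.
apply: le_trans (ler_norm _) _; rewrite normrM ger0_norm //.
by rewrite -[X in _ <= X]mul1r ler_wpM2r.
Qed.

Lemma sum_cw (R : realType) (J : finType) (cw : J -> R) p (l : 'I_p -> R) (y : 'I_p -> J -> R) :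
  (forall k, \sum_j cw j * y k j = 1) ->
  \sum_k l k = \sum_j cw j * \sum_k l k * y k j.
Proof.
move=> hc; under [RHS]eq_bigr do rewrite big_distrr /=.
rewrite exchange_big /=; apply: eq_bigr => k _.
by rewrite -[LHS]mulr1 -(hc k) big_distrr /=; apply: eq_bigr => j _; ring.
Qed.

Unset Implicit Arguments.

Theorem corollary3 (R : realType) (Omega A : finType)
  (uS uR : Omega -> A -> R) (hA : (0 < #|A|)%N)
  (mu : {ffun Omega -> R}) (c : R) (hmu : is_dist mu) (hc : 0 <= c) :
  sup (values uS uR mu c (fun n => (n <= minn #|A| #|Omega|.+1)%N)) = V uS uR mu c.
Proof.
have [a0 _] : exists a0 : A, a0 \in A by apply/card_gt0P.
set S1 := values uS uR mu c (fun n => (n <= minn #|A| #|Omega|.+1)%N).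
rewrite /V; set S2 := values uS uR mu c (fun _ => True).
set M := \sum_w \sum_a `|uS w a|.
have hb : forall v, S2 v -> v <= M.
  move=> v [n [lam [nu [_ [hl hs hd _ _] ->]]]].
  rewrite -[M]mul1r -hs big_distrl /=; apply: ler_sum => i _.
  by apply: ler_wpM2l => //; apply: uS_bound.
have hS1 : S1 (1 * uS_star uS uR mu).
  exists 1%N, (fun _ => 1), (fun _ => mu); split.
  - by rewrite leq_min hA.
  - split.
    + by move=> i; rewrite ler01.
    + by rewrite big_ord1.
    + by move=> _.
    + by move=> w; rewrite big_ord1 mul1r.
    + by rewrite big_ord1 mul1r lerBlDr lerDl.
  - by rewrite big_ord1.
have key : forall v, S2 v -> exists v', S1 v' /\ v <= v'.
  move=> v [n [lam [nu [_ [hl hs hnu hd he] ->]]]].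
  pose f i := [arg max_(a > a0) expected uR (nu i) a]%O.
  have hf : forall i, Astar uR (nu i) (f i) by move=> i; apply: best_exists.
  pose P (k : 'I_#|A|) := fun i => enum_rank (f i) == k.
  have hPa : forall k i, P k i -> Astar uR (nu i) (enum_val k).
    by move=> k i /eqP <-; rewrite enum_rankK.
  pose Lk k := \sum_(i | P k i) lam i.
  pose nk k := mnu lam nu mu (P k).
  have hm := fun k => @merge R Omega A uS uR n lam nu mu (P k) (enum_val k) hmu hl hnu (hPa k).
  have part : forall F : 'I_n -> R, \sum_i F i = \sum_k \sum_(i | P k i) F i.
    by move=> F; rewrite (partition_big (fun i => enum_rank (f i)) xpredT).
  pose cw (o : option Omega) : R := if o is Some _ then 1 else 0.
  pose x k (o : option Omega) := if o is Some w then nk k w else entropy (nk k).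
  have hcw : forall k, \sum_o cw o * x k o = 1.
    move=> k; rewrite sum_option /= mul0r add0r.
    have [[_ h1] _ _ _] := hm k.
    by rewrite -[RHS]h1; apply: eq_bigr => w _; rewrite mul1r.
  have hLk : forall k, 0 <= Lk k by move=> k; rewrite sumr_ge0.
  have [m [g [lam' [hmle hl' hx hu]]]] :=
    @lp_reduce R (option Omega) cw #|A| x (fun k => uS_star uS uR (nk k)) Lk hcw hLk.
  exists (\sum_k lam' k * uS_star uS uR (nk (g k))); split; last first.
    apply: le_trans hu; rewrite part; apply: ler_sum => k _.
    by have [_ _ h _] := hm k.
  exists m, lam', (fun k => nk (g k)); split => //.
    by move: hmle; rewrite card_option.
  split => //.
  - rewrite (@sum_cw R (option Omega) cw m lam' (fun k => x (g k)) (fun k => hcw (g k))).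
    under eq_bigr do rewrite hx.
    by rewrite -(@sum_cw R (option Omega) cw #|A| Lk x hcw) -hs part.
  - by move=> k; have [h _ _ _] := hm (g k).
  - move=> w; have := hx (Some w); rewrite /= => ->.
    rewrite -hd part; apply: eq_bigr => k _.
    by have [_ h _ _] := hm k; rewrite h.
  - have := hx None; rewrite /= => ->.
    apply: le_trans he _; rewrite part; apply: ler_sum => k _.
    by have [_ _ _ h] := hm k.
have hS2 : S2 !=set0.
  exists (1 * uS_star uS uR mu).
  by case: hS1 => n [lam [nu [_ hf ->]]]; exists n, lam, nu.
have hsup2 : has_sup S2 by split => //; exists M => v; apply: hb.
have hsup1 : has_sup S1.
  split; first by exists (1 * uS_star uS uR mu).
  exists M => v [n [lam [nu [_ hf ->]]]]; apply: hb; by exists n, lam, nu.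
apply/eqP; rewrite eq_le; apply/andP; split.
  apply: ge_sup; first by exists (1 * uS_star uS uR mu).
  move=> v [n [lam [nu [_ hf ->]]]]; apply: sup_upper_bound => //.
  by exists n, lam, nu.
apply: ge_sup => // v hv.
have [v' [h1 h2]] := key v hv.
by apply: le_trans h2 _; apply: sup_upper_bound.
Qed.
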